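(* Fix $s\in\mathbb C^n$, let $\hat y\in\hat{\mathbb Y}(s)$ and $\beta=\beta(\hat y)$. Consider the equation $B\theta=\beta+2\pi k$ in unknowns $\theta\in\mathbb R^n$ and integer vector $k\in\mathbb Z^m$. Then: (1) For $\theta\in(-\pi,\pi]^n$, $h_\theta(\hat y)\in\mathbb X(s)$ if and only if there exists $k\in\mathbb Z^m$ such that $(\theta,k)$ solves $B\theta=\beta+2\pi k$. (2) If the equation $B\theta=\beta+2\pi k$ has a solution, then there is a solution $(\theta,k)$ with $\theta\in(-\pi,\pi]^n$, and the set of all solutions $(\theta',k')\in\mathbb R^n\times\mathbb Z^m$ equals $\sigma(\theta,k):=\{(\theta+2\pi\alpha,\,k+B\alpha):\alpha\in\mathbb Z^n\}$; in particular there is at most one such equivalence class of solutions.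
   Context: $G=(N,E)$ is a directed graph with nodes $N=\{0,1,\dots,n\}$ and $m=|E|$ links, whose underlying undirected graph is connected; $(i,j)\in E$ denotes a link from $i$ to $j$. Each link has impedance $z_{ij}=r_{ij}+\mathbf{i}x_{ij}$, each node $i$ shunt admittance $y_i=g_i-\mathbf{i}b_i$. The voltage $V_0$ at node 0 is given and taken as angle reference: $V_0=|V_0|$ real and positive; $v_0:=|V_0|^2$. $\mathbb X(s)$ (for $s=(s_1,\dots,s_n)\in\mathbb C^n$) is the set of $x=(S,I,V,s_0)$ with $S,I\in\mathbb C^E$, $V=(V_1,\dots,V_n)$, $s_0\in\mathbb C$ satisfying $V_i-V_j=z_{ij}I_{ij}$, $S_{ij}=V_iI_{ij}^*$ for $(i,j)\in E$, and $\sum_{k:(j,k)\in E}S_{jk}-\sum_{i:(i,j)\in E}(S_{ij}-z_{ij}|I_{ij}|^2)+y_j^*|V_j|^2=s_j$ for $j\in N$. $\hat{\mathbb Y}(s)$ is the set of real $\hat y=(P,Q,\ell,v,p_0,q_0)$ ($P,Q,\ell$ indexed by $E$, $v=(v_1,\dots,v_n)$), with $S_{ij}:=P_{ij}+\mathbf{i}Q_{ij}$ and $s_j=p_j+\mathbf{i}q_j$, satisfying $p_j=\sum_{k:(j,k)\in E}P_{jk}-\sum_{i:(i,j)\in E}(P_{ij}-r_{ij}\ell_{ij})+g_jv_j$, $q_j=\sum_{k:(j,k)\in E}Q_{jk}-\sum_{i:(i,j)\in E}(Q_{ij}-x_{ij}\ell_{ij})+b_jv_j$ for $j\in N$, and $v_j=v_i-2(r_{ij}P_{ij}+x_{ij}Q_{ij})+(r_{ij}^2+x_{ij}^2)\ell_{ij}$,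 $\ell_{ij}=(P_{ij}^2+Q_{ij}^2)/v_i$ for $(i,j)\in E$. $B$ is the $m\times n$ reduced incidence matrix: $B_{ei}=1$ if link $e$ leaves node $i$, $-1$ if it enters $i$, $0$ otherwise ($e\in E$, $i=1,\dots,n$). $\beta=\beta(\hat y)\in(-\pi,\pi]^m$ with $\beta_{ij}=\angle(v_i-z_{ij}^*S_{ij})$. For $\theta\in(-\pi,\pi]^n$ (and $\theta_0:=0$), $h_\theta(\hat y)=(S,I,V,s_0)$ with $S_{ij}=P_{ij}+\mathbf{i}Q_{ij}$, $I_{ij}=\sqrt{\ell_{ij}}e^{\mathbf{i}(\theta_i-\angle S_{ij})}$, $V_i=\sqrt{v_i}e^{\mathbf{i}\theta_i}$, $s_0=p_0+\mathbf{i}q_0$. *)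

(* Defs.v *)
From Stdlib Require Import Reals ZArith List.
From Coquelicot Require Import Coquelicot.
Import ListNotations.
Set Implicit Arguments.

Notation Cx := Complex.C.
Local Open Scope R_scope.

Definition cis (t : R) : Cx := (cos t, sin t).

(* Principal argument in (-pi, pi]; convention: arg 0 = 0. *)
Definition Carg (z : Cx) : R :=
  if Req_EM_T (Cmod z) 0 then 0
  else if Rle_lt_dec 0 (Im z) then acos (Re z / Cmod z)
       else - acos (Re z / Cmod z).

(* Graph data: nodes 0..n, links indexed by e = 0..m-1, link e goes from
   node [tl e] to node [hd e]. *)

Definition is_digraph (n m : nat) (tl hd : nat -> nat) : Prop :=
  (forall e, (e < m)%nat -> (tl e <= n)%nat /\ (hd e <= n)%nat /\ tl e <> hd e) /\
  (forall e e', (e < m)%nat -> (e' < m)%nat -> tl e = tl e' -> hd e = hd e' -> e = e').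

Inductive ureach (m : nat) (tl hd : nat -> nat) : nat -> Prop :=
| ureach0 : ureach m tl hd 0
| ureach_fw : forall e, (e < m)%nat -> ureach m tl hd (tl e) -> ureach m tl hd (hd e)
| ureach_bw : forall e, (e < m)%nat -> ureach m tl hd (hd e) -> ureach m tl hd (tl e).

Definition uconnected (n m : nat) (tl hd : nat -> nat) : Prop :=
  forall i, (i <= n)%nat -> ureach m tl hd i.

Definition sumR (l : list nat) (f : nat -> R) : R := fold_right (fun e a => f e + a) 0 l.
Definition sumC (l : list nat) (f : nat -> Cx) : Cx :=
  fold_right (fun e a => Cplus (f e) a) (RtoC 0) l.
Definition sumZ (l : list nat) (f : nat -> Z) : Z :=
  fold_right (fun e a => (f e + a)%Z) 0%Z l.
Definition links (m : nat) : list nat := seq 0 m.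
Definition nodes1 (n : nat) : list nat := seq 1 n.

(* Reduced incidence matrix B (m x n, columns i = 1..n) *)
Definition Binc (tl hd : nat -> nat) (e i : nat) : Z :=
  if Nat.eqb (tl e) i then 1%Z else if Nat.eqb (hd e) i then (-1)%Z else 0%Z.

Definition BmulR (n : nat) (tl hd : nat -> nat) (th : nat -> R) (e : nat) : R :=
  sumR (nodes1 n) (fun i => IZR (Binc tl hd e i) * th i).
Definition BmulZ (n : nat) (tl hd : nat -> nat) (a : nat -> Z) (e : nat) : Z :=
  sumZ (nodes1 n) (fun i => (Binc tl hd e i * a i)%Z).

Definition ext0 {T} (x0 : T) (x : nat -> T) (j : nat) : T :=
  if Nat.eqb j 0 then x0 else x j.

(* link impedance z_e = r_e + i x_e, node shunt admittance y_j = g_j - i b_j *)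
Definition zimp (r x : nat -> R) (e : nat) : Cx := (r e, x e).
Definition yadm (g b : nat -> R) (j : nat) : Cx := (g j, - b j).
Definition sq (z : Cx) : R := Cmod z ^ 2.

(* x = (S, I, V, s0) in X(s); V indexed by 1..n, V_0 = |V_0| = V0 *)
Definition inX (n m : nat) (tl hd : nat -> nat) (r x g b : nat -> R) (V0 : R)
  (s : nat -> Cx) (S I V : nat -> Cx) (s0 : Cx) : Prop :=
  let Vf := ext0 (RtoC V0) V in
  let z := zimp r x in
  (forall e, (e < m)%nat -> Cminus (Vf (tl e)) (Vf (hd e)) = Cmult (z e) (I e)) /\
  (forall e, (e < m)%nat -> S e = Cmult (Vf (tl e)) (Cconj (I e))) /\
  (forall j, (j <= n)%nat ->
     Cplus (Cminus (sumC (links m) (fun e => if Nat.eqb (tl e) j then S e else RtoC 0))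
                   (sumC (links m) (fun e => if Nat.eqb (hd e) j
                                     then Cminus (S e) (Cmult (z e) (RtoC (sq (I e))))
                                     else RtoC 0)))
           (Cmult (Cconj (yadm g b j)) (RtoC (sq (Vf j))))
     = ext0 s0 s j).

(* yhat = (P, Q, l, v, p0, q0) in Yhat(s); v indexed by 1..n, v_0 = V0^2 *)
Definition inYhat (n m : nat) (tl hd : nat -> nat) (r x g b : nat -> R) (V0 : R)
  (s : nat -> Cx) (P Q l v : nat -> R) (p0 q0 : R) : Prop :=
  let vf := ext0 (V0 ^ 2) v in
  (forall j, (j <= n)%nat ->
     ext0 p0 (fun j => Re (s j)) j =
       sumR (links m) (fun e => if Nat.eqb (tl e) j then P e else 0)
     - sumR (links m) (fun e => if Nat.eqb (hd e) j then P e - r e * l e else 0)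
     + g j * vf j) /\
  (forall j, (j <= n)%nat ->
     ext0 q0 (fun j => Im (s j)) j =
       sumR (links m) (fun e => if Nat.eqb (tl e) j then Q e else 0)
     - sumR (links m) (fun e => if Nat.eqb (hd e) j then Q e - x e * l e else 0)
     + b j * vf j) /\
  (forall e, (e < m)%nat ->
     vf (hd e) = vf (tl e) - 2 * (r e * P e + x e * Q e) + (r e ^ 2 + x e ^ 2) * l e) /\
  (forall e, (e < m)%nat -> l e = (P e ^ 2 + Q e ^ 2) / vf (tl e)).

Definition beta (tl : nat -> nat) (r x : nat -> R) (V0 : R) (P Q v : nat -> R) (e : nat) : R :=
  let vf := ext0 (V0 ^ 2) v in
  Carg (Cminus (RtoC (vf (tl e))) (Cmult (Cconj (zimp r x e)) (P e, Q e))).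

(* h_theta(yhat) = (S, I, V, s0), theta_0 := 0 *)
Definition hS (P Q : nat -> R) (e : nat) : Cx := (P e, Q e).
Definition hI (tl : nat -> nat) (th : nat -> R) (P Q l : nat -> R) (e : nat) : Cx :=
  Cmult (RtoC (sqrt (l e))) (cis (ext0 0 th (tl e) - Carg (hS P Q e))).
Definition hV (th v : nat -> R) (i : nat) : Cx := Cmult (RtoC (sqrt (v i))) (cis (th i)).
Definition hs0 (p0 q0 : R) : Cx := (p0, q0).

Definition solves (n m : nat) (tl hd : nat -> nat) (bet : nat -> R)
  (th : nat -> R) (k : nat -> Z) : Prop :=
  forall e, (e < m)%nat -> BmulR n tl hd th e = bet e + 2 * PI * IZR (k e).

Definition in_box (n : nat) (th : nat -> R) : Prop :=
  forall i, (1 <= i <= n)%nat -> - PI < th i <= PI.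

(* Main.v *)
Require Import Defs.
From Stdlib Require Import Reals ZArith Lra Lia Psatz List.
From Coquelicot Require Import Coquelicot.
Import ListNotations.
Local Open Scope R_scope.

Lemma Ceq (a b : Cx) : fst a = fst b -> snd a = snd b -> a = b.
Proof. destruct a, b; simpl; intros; subst; reflexivity. Qed.

Lemma Carg_spec (z : Cx) :
  fst z = Cmod z * cos (Carg z) /\ snd z = Cmod z * sin (Carg z).
Proof.
  destruct z as [a c]. unfold Carg. change (Re (a, c)) with a. change (Im (a, c)) with c.
  change (fst (a, c)) with a. change (snd (a, c)) with c.
  assert (HM2 : Cmod (a, c) * Cmod (a, c) = a ^ 2 + c ^ 2)
    by (unfold Cmod; simpl fst; simpl snd; apply sqrt_sqrt; nra).
  assert (HM0 : 0 <= Cmod (a, c)) by apply Cmod_ge_0.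
  set (M := Cmod (a, c)) in *.
  destruct (Req_EM_T M 0) as [H0|H0].
  - rewrite H0 in HM2. rewrite H0. split; nra.
  - assert (HM : 0 < M) by lra.
    assert (Hb : -1 <= a / M <= 1).
    { split.
      - apply (Rmult_le_reg_r M); [lra|]. field_simplify; [|lra]. nra.
      - apply (Rmult_le_reg_r M); [lra|]. field_simplify; [|lra]. nra. }
    assert (Hs : sqrt (1 - (a / M)²) = Rabs c / M).
    { replace (1 - (a / M)²) with ((c / M)²).
      - rewrite sqrt_Rsqr_abs. unfold Rdiv. rewrite Rabs_mult.
        rewrite (Rabs_right (/ M)); [reflexivity|]. apply Rle_ge, Rlt_le, Rinv_0_lt_compat; lra.
      - assert (E1 : 1 = (a^2+c^2)/(M*M)) by (rewrite <- HM2; field; lra).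
        rewrite E1 at 1. unfold Rsqr. field. lra. }
    destruct (Rle_lt_dec 0 c).
    + rewrite cos_acos, sin_acos, Hs, Rabs_right by (auto; lra). split; field; lra.
    + rewrite cos_neg, sin_neg, cos_acos, sin_acos, Hs, Rabs_left by (auto; lra). split; field; lra.
Qed.

Lemma cis_eq (a b : R) :
  (cos a = cos b /\ sin a = sin b) <-> exists k : Z, a = b + 2 * PI * IZR k.
Proof.
  split.
  - intros [Hc Hs].
    assert (Ht : cos (a - b) = 1).
    { rewrite cos_minus, Hc, Hs. pose proof (sin2_cos2 b). unfold Rsqr in H. lra. }
    replace (a - b) with (2 * ((a - b) / 2)) in Ht by field.
    rewrite cos_2a_sin in Ht.
    assert (sin ((a - b) / 2) = 0) by nra.
    destruct (sin_eq_0_0 _ H) as [k Hk]. exists k. lra.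
  - intros [k Hk]. subst a.
    assert (H0 : sin (IZR k * PI) = 0) by (apply sin_eq_0_1; eauto).
    assert (Hc : cos (2 * PI * IZR k) = 1).
    { replace (2 * PI * IZR k) with (2 * (IZR k * PI)) by ring. rewrite cos_2a_sin, H0. ring. }
    assert (Hs : sin (2 * PI * IZR k) = 0).
    { replace (2 * PI * IZR k) with (2 * (IZR k * PI)) by ring. rewrite sin_2a, H0. ring. }
    rewrite cos_plus, sin_plus, Hc, Hs. split; ring.
Qed.

Lemma sumR_ext_in (l : list nat) (f g : nat -> R) :
  (forall e, In e l -> f e = g e) -> sumR l f = sumR l g.
Proof.
  induction l as [|a l IH]; intros H; simpl; [reflexivity|].
  rewrite H by (left; reflexivity). rewrite IH; [reflexivity|]. intros; apply H; right; auto.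
Qed.

Lemma sumR_minus (l : list nat) (f g : nat -> R) :
  sumR l (fun e => f e - g e) = sumR l f - sumR l g.
Proof. induction l as [|a l IH]; simpl; [ring|]. rewrite IH; ring. Qed.

Lemma sumR_ind (f : nat -> R) (c k a : nat) :
  sumR (seq a k) (fun i => if Nat.eqb c i then f i else 0)
  = if andb (Nat.leb a c) (Nat.ltb c (a + k)) then f c else 0.
Proof.
  revert a. induction k as [|k IH]; intros a; simpl.
  - destruct (Nat.leb a c) eqn:E1; destruct (Nat.ltb c (a + 0)) eqn:E2; simpl; auto.
    apply Nat.leb_le in E1; apply Nat.ltb_lt in E2; lia.
  - rewrite IH. destruct (Nat.eqb c a) eqn:E.
    + apply Nat.eqb_eq in E; subst.
      destruct (Nat.leb (S a) a) eqn:E1. { apply Nat.leb_le in E1; lia. }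
      simpl. rewrite Nat.leb_refl. replace (Nat.ltb a (a + S k)) with true. simpl; ring.
      symmetry; apply Nat.ltb_lt; lia.
    + apply Nat.eqb_neq in E.
      replace (Nat.leb a c) with (Nat.leb (S a) c) by
        (destruct (Nat.leb (S a) c) eqn:E1; destruct (Nat.leb a c) eqn:E2; auto;
         [apply Nat.leb_le in E1; apply Nat.leb_gt in E2; lia
         |apply Nat.leb_gt in E1; apply Nat.leb_le in E2; lia]).
      replace (S a + k)%nat with (a + S k)%nat by lia. ring.
Qed.

Lemma BmulR_eq (n : nat) (tl hd : nat -> nat) (th : nat -> R) (e : nat) :
  (tl e <= n)%nat -> (hd e <= n)%nat -> tl e <> hd e ->
  BmulR n tl hd th e = ext0 0 th (tl e) - ext0 0 th (hd e).
Proof.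
  intros H1 H2 H3. unfold BmulR, nodes1.
  rewrite (sumR_ext_in _ _ (fun i => (if Nat.eqb (tl e) i then th i else 0)
                                    - (if Nat.eqb (hd e) i then th i else 0))).
  - rewrite sumR_minus, !sumR_ind. unfold ext0.
    destruct (tl e) as [|t]; destruct (hd e) as [|h]; simpl;
    repeat match goal with |- context [Nat.leb ?a ?b] => destruct (Nat.leb a b) eqn:?; simpl end;
    repeat match goal with |- context [Nat.ltb ?a ?b] => destruct (Nat.ltb a b) eqn:?; simpl end;
    repeat match goal with H : Nat.leb _ _ = _ |- _ => first [apply Nat.leb_le in H | apply Nat.leb_gt in H] end;
    repeat match goal with H : Nat.ltb _ _ = _ |- _ => first [apply Nat.ltb_lt in H | apply Nat.ltb_ge in H] end;
    try ring; try lia.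
  - intros i _. unfold Binc.
    destruct (Nat.eqb (tl e) i) eqn:E1; destruct (Nat.eqb (hd e) i) eqn:E2; simpl; try ring.
    apply Nat.eqb_eq in E1; apply Nat.eqb_eq in E2; congruence.
Qed.

Lemma IZR_sumZ (l : list nat) (f : nat -> Z) :
  IZR (sumZ l f) = sumR l (fun i => IZR (f i)).
Proof. induction l as [|a l IH]; simpl; [reflexivity|]. rewrite plus_IZR, IH; reflexivity. Qed.

Lemma BmulZ_R n tl hd (al : nat -> Z) e :
  IZR (BmulZ n tl hd al e) = BmulR n tl hd (fun i => IZR (al i)) e.
Proof. unfold BmulZ, BmulR. rewrite IZR_sumZ. apply sumR_ext_in. intros; apply mult_IZR. Qed.

Lemma fst_sumC l f : fst (sumC l f) = sumR l (fun e => fst (f e)).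
Proof. induction l as [|a l IH]; simpl; [reflexivity|]. rewrite IH; reflexivity. Qed.
Lemma snd_sumC l f : snd (sumC l f) = sumR l (fun e => snd (f e)).
Proof. induction l as [|a l IH]; simpl; [reflexivity|]. rewrite IH; reflexivity. Qed.

Lemma fin_choice {A : Type} (d : A) (P : nat -> A -> Prop) (m : nat) :
  (forall e, (e < m)%nat -> exists a, P e a) -> exists f : nat -> A, forall e, (e < m)%nat -> P e (f e).
Proof.
  induction m as [|m IH]; intros H.
  - exists (fun _ => d). intros; lia.
  - destruct IH as [f Hf]. { intros; apply H; lia. }
    destruct (H m ltac:(lia)) as [a Ha].
    exists (fun e => if Nat.eqb e m then a else f e). intros e He.
    destruct (Nat.eqb e m) eqn:E. { apply Nat.eqb_eq in E; subst; auto. }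
    apply Nat.eqb_neq in E. apply Hf; lia.
Qed.

Lemma sq_eq (z : Cx) : sq z = fst z ^ 2 + snd z ^ 2.
Proof. unfold sq, Cmod. rewrite pow2_sqrt; [reflexivity|]. nra. Qed.

Lemma Vf_form (V0 : R) (th v : nat -> R) (j : nat) : 0 < V0 ->
  ext0 (RtoC V0) (hV th v) j = Cmult (RtoC (sqrt (ext0 (V0 ^ 2) v j))) (cis (ext0 0 th j)).
Proof.
  intros H. unfold ext0, hV. destruct (Nat.eqb j 0); [|reflexivity].
  rewrite sqrt_pow2 by lra. unfold cis. rewrite cos_0, sin_0.
  apply Ceq; simpl; ring.
Qed.

Lemma hI_comp (tl : nat -> nat) (th P Q l : nat -> R) (e : nat) (A : R) :
  0 < A -> l e = (P e ^ 2 + Q e ^ 2) / A ->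
  fst (hI tl th P Q l e) = (cos (ext0 0 th (tl e)) * P e + sin (ext0 0 th (tl e)) * Q e) / sqrt A /\
  snd (hI tl th P Q l e) = (sin (ext0 0 th (tl e)) * P e - cos (ext0 0 th (tl e)) * Q e) / sqrt A.
Proof.
  intros HA Hl. unfold hI. set (t := ext0 0 th (tl e)).
  destruct (Carg_spec (hS P Q e)) as [H1 H2]. unfold hS in *. simpl fst in H1; simpl snd in H2.
  set (phi := Carg (P e, Q e)) in *.
  assert (HM : sqrt (l e) = Cmod (P e, Q e) / sqrt A).
  { rewrite Hl, sqrt_div by (nra || lra). unfold Cmod. reflexivity. }
  set (M := Cmod (P e, Q e)) in *.
  assert (Ha : 0 < sqrt A) by (apply sqrt_lt_R0; lra).
  unfold cis. simpl fst; simpl snd. rewrite HM, cos_minus, sin_minus, H1, H2.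
  split; field; lra.
Qed.

Lemma cond1_iff (tl hd : nat -> nat) (r x : nat -> R) (V0 : R) (th P Q l v : nat -> R) (e : nat) :
  0 < V0 ->
  0 < ext0 (V0 ^ 2) v (tl e) -> 0 < ext0 (V0 ^ 2) v (hd e) ->
  l e = (P e ^ 2 + Q e ^ 2) / ext0 (V0 ^ 2) v (tl e) ->
  ext0 (V0 ^ 2) v (hd e) = ext0 (V0 ^ 2) v (tl e) - 2 * (r e * P e + x e * Q e)
                           + (r e ^ 2 + x e ^ 2) * l e ->
  (Cminus (ext0 (RtoC V0) (hV th v) (tl e)) (ext0 (RtoC V0) (hV th v) (hd e))
   = Cmult (zimp r x e) (hI tl th P Q l e)
  <-> (cos (ext0 0 th (tl e) - beta tl r x V0 P Q v e) = cos (ext0 0 th (hd e)) /\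
       sin (ext0 0 th (tl e) - beta tl r x V0 P Q v e) = sin (ext0 0 th (hd e)))).
Proof.
  intros HV0 HA HB Hl Hh.
  rewrite !Vf_form by exact HV0.
  destruct (hI_comp tl th P Q l e _ HA Hl) as [I1 I2].
  set (A := ext0 (V0 ^ 2) v (tl e)) in *.
  set (Bv := ext0 (V0 ^ 2) v (hd e)) in *.
  set (ti := ext0 0 th (tl e)) in *.
  set (tj := ext0 0 th (hd e)) in *.
  unfold beta. fold A.
  set (w := Cminus (RtoC A) (Cmult (Cconj (zimp r x e)) (P e, Q e))).
  destruct (Carg_spec w) as [W1 W2].
  set (bt := Carg w) in *. set (W := Cmod w) in *.
  assert (Wc : fst w = A - (r e * P e + x e * Q e)) by (unfold w, zimp; simpl; ring).
  assert (Ws : snd w = x e * P e - r e * Q e) by (unfold w, zimp; simpl; ring).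
  assert (Ha : 0 < sqrt A) by (apply sqrt_lt_R0; lra).
  assert (Hb : 0 < sqrt Bv) by (apply sqrt_lt_R0; lra).
  assert (Ha2 : sqrt A * sqrt A = A) by (apply sqrt_sqrt; lra).
  assert (Hb2 : sqrt Bv * sqrt Bv = Bv) by (apply sqrt_sqrt; lra).
  assert (HW : W = sqrt A * sqrt Bv).
  { unfold W, Cmod. rewrite Wc, Ws, <- sqrt_mult by lra. f_equal.
    rewrite Hh, Hl. field. lra. }
  set (a := sqrt A) in *. set (c := sqrt Bv) in *.
  assert (F1 : a * ((a * cos ti - 0 * sin ti) - (c * cos tj - 0 * sin tj)
                    - (r e * fst (hI tl th P Q l e) - x e * snd (hI tl th P Q l e)))
               = a * c * (cos (ti - bt) - cos tj)).
  { rewrite I1, I2, cos_minus.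
    replace (a * c * (cos ti * cos bt + sin ti * sin bt - cos tj))
      with (cos ti * (W * cos bt) + sin ti * (W * sin bt) - a * c * cos tj) by (rewrite HW; ring).
    rewrite <- W1, <- W2, Wc, Ws, <- Ha2. field. lra. }
  assert (F2 : a * ((a * sin ti + 0 * cos ti) - (c * sin tj + 0 * cos tj)
                    - (r e * snd (hI tl th P Q l e) + x e * fst (hI tl th P Q l e)))
               = a * c * (sin (ti - bt) - sin tj)).
  { rewrite I1, I2, sin_minus.
    replace (a * c * (sin ti * cos bt - cos ti * sin bt - sin tj))
      with (sin ti * (W * cos bt) - cos ti * (W * sin bt) - a * c * sin tj) by (rewrite HW; ring).
    rewrite <- W1, <- W2, Wc, Ws, <- Ha2. field. lra. }
  assert (Hac : a * c <> 0) by nra.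
  split.
  - intros Heq.
    assert (E1 := f_equal fst Heq). assert (E2 := f_equal snd Heq).
    unfold Cminus, Cplus, Copp, Cmult, RtoC, cis, zimp in E1, E2; cbn [fst snd] in E1, E2.
    split.
    + assert (a * c * (cos (ti - bt) - cos tj) = 0) by (rewrite <- F1; apply Rmult_eq_0_compat_l; lra).
      apply Rmult_integral in H. destruct H; [contradiction|lra].
    + assert (a * c * (sin (ti - bt) - sin tj) = 0) by (rewrite <- F2; apply Rmult_eq_0_compat_l; lra).
      apply Rmult_integral in H. destruct H; [contradiction|lra].
  - intros [C1 C2]. apply Ceq; unfold Cminus, Cplus, Copp, Cmult, RtoC, cis, zimp; cbn [fst snd].
    + assert (a * (a * cos ti - 0 * sin ti - (c * cos tj - 0 * sin tj) -
          (r e * fst (hI tl th P Q l e) - x e * snd (hI tl th P Q l e))) = 0)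
        by (rewrite F1, C1; ring).
      apply Rmult_integral in H. destruct H; [lra|]. lra.
    + assert (a * (a * sin ti + 0 * cos ti - (c * sin tj + 0 * cos tj) -
          (r e * snd (hI tl th P Q l e) + x e * fst (hI tl th P Q l e))) = 0)
        by (rewrite F2, C2; ring).
      apply Rmult_integral in H. destruct H; [lra|]. lra.
Qed.

Lemma sq_hI (tl : nat -> nat) (th P Q l : nat -> R) (e : nat) (A : R) :
  0 < A -> l e = (P e ^ 2 + Q e ^ 2) / A -> sq (hI tl th P Q l e) = l e.
Proof.
  intros HA Hl. destruct (hI_comp tl th P Q l e A HA Hl) as [I1 I2].
  rewrite sq_eq, I1, I2, Hl.
  assert (Ha : 0 < sqrt A) by (apply sqrt_lt_R0; lra).
  assert (Ha2 : sqrt A * sqrt A = A) by (apply sqrt_sqrt; lra).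
  pose proof (sin2_cos2 (ext0 0 th (tl e))) as Hcs. unfold Rsqr in Hcs.
  set (c := cos (ext0 0 th (tl e))) in *. set (s := sin (ext0 0 th (tl e))) in *.
  transitivity ((P e ^ 2 + Q e ^ 2) * (s * s + c * c) / (sqrt A * sqrt A)); [field; lra|].
  rewrite Hcs, Ha2. field. lra.
Qed.

Lemma sq_Vf (V0 : R) (th v : nat -> R) (j : nat) : 0 < V0 -> 0 <= ext0 (V0 ^ 2) v j ->
  sq (ext0 (RtoC V0) (hV th v) j) = ext0 (V0 ^ 2) v j.
Proof.
  intros H0 H. rewrite Vf_form, sq_eq by exact H0.
  unfold cis, Cmult, RtoC; cbn [fst snd].
  pose proof (sin2_cos2 (ext0 0 th j)) as Hcs. unfold Rsqr in Hcs.
  pose proof (sqrt_sqrt _ H) as Hs.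
  transitivity (sqrt (ext0 (V0 ^ 2) v j) * sqrt (ext0 (V0 ^ 2) v j) *
     (sin (ext0 0 th j) * sin (ext0 0 th j) + cos (ext0 0 th j) * cos (ext0 0 th j))); [ring|].
  rewrite Hcs, Hs. ring.
Qed.

Lemma box_exists (t : R) : exists z : Z, - PI < t - 2 * PI * IZR z <= PI.
Proof.
  pose proof PI_RGT_0 as Hpi.
  set (w := - ((t - PI) / (2 * PI))).
  destruct (archimed w) as [H1 H2].
  exists (1 - up w)%Z. rewrite minus_IZR.
  assert (Hw : 2 * PI * w = PI - t) by (unfold w; field; lra).
  assert (A1 : 2 * PI * IZR (up w) > 2 * PI * w) by (apply Rmult_lt_compat_l; lra).
  assert (A2 : 2 * PI * IZR (up w) <= 2 * PI * (w + 1)) by (apply Rmult_le_compat_l; lra).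
  split; nra.
Qed.

Lemma shift_sol (n m : nat) (tl hd : nat -> nat) (bet th th' : nat -> R) (k k' : nat -> Z) (al : nat -> Z) :
  is_digraph n m tl hd -> solves n m tl hd bet th k ->
  (forall i, (1 <= i <= n)%nat -> th' i = th i + 2 * PI * IZR (al i)) ->
  (forall e, (e < m)%nat -> k' e = (k e + BmulZ n tl hd al e)%Z) ->
  solves n m tl hd bet th' k'.
Proof.
  intros [Hd _] Hs Hth Hk e He. destruct (Hd e He) as [H1 [H2 H3]].
  assert (Ext : forall j, (j <= n)%nat ->
     ext0 0 th' j = ext0 0 th j + 2 * PI * ext0 0 (fun i => IZR (al i)) j).
  { intros j Hj. unfold ext0. destruct j as [|j]; simpl; [ring|]. apply Hth; lia. }
  rewrite BmulR_eq, Ext, Ext, Hk, plus_IZR, BmulZ_R, BmulR_eq by auto.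
  specialize (Hs e He). rewrite BmulR_eq in Hs by auto.
  transitivity ((ext0 0 th (tl e) - ext0 0 th (hd e)) +
     2 * PI * (ext0 0 (fun i => IZR (al i)) (tl e) - ext0 0 (fun i => IZR (al i)) (hd e))); [ring|].
  rewrite Hs. ring.
Qed.

Theorem lemma1 (n m : nat) (tl hd : nat -> nat) (r x g b : nat -> R) (V0 : R)
  (s : nat -> Cx) (P Q l v : nat -> R) (p0 q0 : R) :
  is_digraph n m tl hd -> uconnected n m tl hd -> 0 < V0 ->
  (forall j, (1 <= j <= n)%nat -> 0 < v j) ->
  inYhat n m tl hd r x g b V0 s P Q l v p0 q0 ->
  let bet := beta tl r x V0 P Q v in
  (* (1) *)
  (forall th : nat -> R, in_box n th ->
     (inX n m tl hd r x g b V0 s (hS P Q) (hI tl th P Q l) (hV th v) (hs0 p0 q0)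
      <-> exists k : nat -> Z, solves n m tl hd bet th k)) /\
  (* (2) *)
  ((exists (th : nat -> R) (k : nat -> Z), solves n m tl hd bet th k) ->
   exists (th : nat -> R) (k : nat -> Z),
     in_box n th /\ solves n m tl hd bet th k /\
     forall (th' : nat -> R) (k' : nat -> Z),
       solves n m tl hd bet th' k' <->
       exists al : nat -> Z,
         (forall i, (1 <= i <= n)%nat -> th' i = th i + 2 * PI * IZR (al i)) /\
         (forall e, (e < m)%nat -> k' e = (k e + BmulZ n tl hd al e)%Z)).
Proof.
  intros Hdg Hcon HV0 Hv HY bet.
  pose proof Hdg as [Hdg1 Hdg2].
  unfold inYhat in HY; cbv zeta in HY. destruct HY as [HYp [HYq [HYh HYl]]].
  assert (Hvf : forall j, (j <= n)%nat -> 0 < ext0 (V0 ^ 2) v j).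
  { intros j Hj. unfold ext0. destruct j as [|j]; simpl Nat.eqb; cbv iota.
    - nra.
    - apply Hv; lia. }
  split.
  - intros th _.
    assert (C1 : forall e, (e < m)%nat ->
      (Cminus (ext0 (RtoC V0) (hV th v) (tl e)) (ext0 (RtoC V0) (hV th v) (hd e))
       = Cmult (zimp r x e) (hI tl th P Q l e)
       <-> exists k, BmulR n tl hd th e = bet e + 2 * PI * IZR k)).
    { intros e He. destruct (Hdg1 e He) as [Ht [Hh Hne]].
      rewrite cond1_iff by auto. rewrite BmulR_eq by auto. rewrite cis_eq.
      split; intros [k Hk]; exists k; unfold bet in *; lra. }
    unfold inX; cbv zeta. split.
    + intros [H1 _].
      destruct (fin_choice 0%Z (fun e k => BmulR n tl hd th e = bet e + 2 * PI * IZR k) m)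
        as [f Hf].
      { intros e He. apply (C1 e He). auto. }
      exists f. exact Hf.
    + intros [k Hk]. split; [|split].
      * intros e He. apply (C1 e He). exists (k e). apply Hk; auto.
      * intros e He. destruct (Hdg1 e He) as [Ht [Hh Hne]].
        rewrite Vf_form by exact HV0.
        destruct (hI_comp tl th P Q l e _ (Hvf _ Ht) (HYl e He)) as [I1 I2].
        set (A := ext0 (V0 ^ 2) v (tl e)) in *.
        assert (Ha : 0 < sqrt A) by (apply sqrt_lt_R0; apply Hvf; auto).
        pose proof (sin2_cos2 (ext0 0 th (tl e))) as Hcs. unfold Rsqr in Hcs.
        apply Ceq; unfold hS, Cconj, Cmult, RtoC, cis; cbn [fst snd]; rewrite I1, I2.
        -- transitivity (P e * (sin (ext0 0 th (tl e)) * sin (ext0 0 th (tl e))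
                      + cos (ext0 0 th (tl e)) * cos (ext0 0 th (tl e)))); [rewrite Hcs; ring|].
           field. lra.
        -- transitivity (Q e * (sin (ext0 0 th (tl e)) * sin (ext0 0 th (tl e))
                      + cos (ext0 0 th (tl e)) * cos (ext0 0 th (tl e)))); [rewrite Hcs; ring|].
           field. lra.
      * intros j Hj.
        assert (Hsi : forall e, In e (links m) ->
                  sq (hI tl th P Q l e) = l e).
        { intros e Hin. unfold links in Hin. apply in_seq in Hin.
          destruct (Hdg1 e ltac:(lia)) as [Ht _].
          apply (sq_hI tl th P Q l e _ (Hvf _ Ht)). apply HYl; lia. }
        rewrite sq_Vf by (auto; apply Rlt_le, Hvf; auto).
        assert (T1 : fst (sumC (links m) (fun e => if Nat.eqb (tl e) j then hS P Q e else RtoC 0))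
                   = sumR (links m) (fun e => if Nat.eqb (tl e) j then P e else 0)).
        { rewrite fst_sumC; apply sumR_ext_in; intros e _; destruct (Nat.eqb (tl e) j); reflexivity. }
        assert (T2 : snd (sumC (links m) (fun e => if Nat.eqb (tl e) j then hS P Q e else RtoC 0))
                   = sumR (links m) (fun e => if Nat.eqb (tl e) j then Q e else 0)).
        { rewrite snd_sumC; apply sumR_ext_in; intros e _; destruct (Nat.eqb (tl e) j); reflexivity. }
        assert (T3 : fst (sumC (links m) (fun e => if Nat.eqb (hd e) j
                   then Cminus (hS P Q e) (Cmult (zimp r x e) (RtoC (sq (hI tl th P Q l e)))) else RtoC 0))
                   = sumR (links m) (fun e => if Nat.eqb (hd e) j then P e - r e * l e else 0)).
        { rewrite fst_sumC; apply sumR_ext_in; intros e Hin; destruct (Nat.eqb (hd e) j); [|reflexivity].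
          rewrite Hsi by exact Hin. unfold hS, zimp, Cminus, Cplus, Copp, Cmult, RtoC; cbn [fst snd]. ring. }
        assert (T4 : snd (sumC (links m) (fun e => if Nat.eqb (hd e) j
                   then Cminus (hS P Q e) (Cmult (zimp r x e) (RtoC (sq (hI tl th P Q l e)))) else RtoC 0))
                   = sumR (links m) (fun e => if Nat.eqb (hd e) j then Q e - x e * l e else 0)).
        { rewrite snd_sumC; apply sumR_ext_in; intros e Hin; destruct (Nat.eqb (hd e) j); [|reflexivity].
          rewrite Hsi by exact Hin. unfold hS, zimp, Cminus, Cplus, Copp, Cmult, RtoC; cbn [fst snd]. ring. }
        apply Ceq.
        -- transitivity (ext0 p0 (fun j => Re (s j)) j).
           ++ rewrite HYp by exact Hj. rewrite <- T1, <- T3.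
              unfold Cminus, Cplus, Copp, Cmult, Cconj, yadm, RtoC; cbn [fst snd]. ring.
           ++ unfold ext0, hs0. destruct (Nat.eqb j 0); reflexivity.
        -- transitivity (ext0 q0 (fun j => Im (s j)) j).
           ++ rewrite HYq by exact Hj. rewrite <- T2, <- T4.
              unfold Cminus, Cplus, Copp, Cmult, Cconj, yadm, RtoC; cbn [fst snd]. ring.
           ++ unfold ext0, hs0. destruct (Nat.eqb j 0); reflexivity.
  - intros [th0 [k0 Hs0]].
    destruct (fin_choice 0%Z (fun i z => - PI < th0 i - 2 * PI * IZR z <= PI) (S n)) as [al Hal].
    { intros; apply box_exists. }
    set (th := fun i => th0 i + 2 * PI * IZR (- al i)).
    set (k := fun e => (k0 e + BmulZ n tl hd (fun i => (- al i)%Z) e)%Z).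
    assert (Hsol : solves n m tl hd bet th k).
    { apply (shift_sol n m tl hd bet th0 th k0 k (fun i => (- al i)%Z)); auto. }
    exists th, k. split; [|split; [exact Hsol|]].
    + intros i Hi. unfold th. rewrite opp_IZR. specialize (Hal i ltac:(lia)).
      replace (th0 i + 2 * PI * - IZR (al i)) with (th0 i - 2 * PI * IZR (al i)) by ring. exact Hal.
    + intros th' k'. split.
      * intros Hs'.
        assert (Hreach : forall j, ureach m tl hd j ->
                  exists z, ext0 0 th' j - ext0 0 th j = 2 * PI * IZR z).
        { induction 1 as [|e He Hr IH|e He Hr IH].
          - exists 0%Z. unfold ext0; simpl. ring.
          - destruct IH as [z Hz]. destruct (Hdg1 e He) as [Ht [Hh Hne]].
            pose proof (Hs' e He) as A1; pose proof (Hsol e He) as A2.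
            rewrite BmulR_eq in A1, A2 by auto.
            exists (z - (k' e - k e))%Z. rewrite !minus_IZR. lra.
          - destruct IH as [z Hz]. destruct (Hdg1 e He) as [Ht [Hh Hne]].
            pose proof (Hs' e He) as A1; pose proof (Hsol e He) as A2.
            rewrite BmulR_eq in A1, A2 by auto.
            exists (z + (k' e - k e))%Z. rewrite plus_IZR, minus_IZR. lra. }
        destruct (fin_choice 0%Z (fun i z => ext0 0 th' i - ext0 0 th i = 2 * PI * IZR z) (S n))
          as [al' Hal'].
        { intros i Hi; apply Hreach, Hcon; lia. }
        assert (Hd : forall j, (j <= n)%nat ->
                  2 * PI * ext0 0 (fun i => IZR (al' i)) j = ext0 0 th' j - ext0 0 th j).
        { intros j Hj. specialize (Hal' j ltac:(lia)). unfold ext0 in *.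
          destruct (Nat.eqb j 0); [ring | lra]. }
        exists al'. split.
        -- intros i Hi. specialize (Hal' i ltac:(lia)). unfold ext0 in Hal'.
           destruct i as [|i]; [lia|]. simpl in Hal'. lra.
        -- intros e He. apply eq_IZR. rewrite plus_IZR, BmulZ_R.
           destruct (Hdg1 e He) as [Ht [Hh Hne]]. rewrite BmulR_eq by auto.
           pose proof (Hs' e He) as A1; pose proof (Hsol e He) as A2.
           rewrite BmulR_eq in A1, A2 by auto.
           pose proof PI_RGT_0.
           apply (Rmult_eq_reg_l (2 * PI)); [|lra].
           rewrite Rmult_plus_distr_l, Rmult_minus_distr_l, Hd, Hd by auto. lra.
      * intros [al' [H1 H2]]. apply (shift_sol n m tl hd bet th th' k k' al'); auto.
Qed.
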